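(* Let $\{p_{(R,\alpha)}(\mathbf{x})\}_{(R,\alpha)}$, $\delta\in[0,\varepsilon)$, be a family of replacement rules, each satisfying the Fixation Axiom, that satisfies Assumption 2, and let $\nu\in(0,1)$. Then: (a) $\rho_A$, $\rho_a$, and $\pi_{\mathrm{RMC}}(\mathbf{x})$ for each $\mathbf{x}\in\{0,1\}^G\setminus\{\mathbf{a},\mathbf{A}\}$ are smooth functions of $\delta\in[0,\varepsilon)$; (b) for each $\mathbf{x}\in\{0,1\}^G$, $\pi_{\mathrm{MSS}}(\mathbf{x})$ (defined for $u\in(0,1]$) extends uniquely to a smooth function of $(u,\delta)\in[0,1]\times[0,\varepsilon)$; (c) for each $\mathbf{x}\in\{0,1\}^G\setminus\{\mathbf{a},\mathbf{A}\}$, $\mathbb{P}_{\mathrm{MSS}}[\mathbf{X}=\mathbf{x}\mid\mathbf{X}\notin\{\mathbf{a},\mathbf{A}\}]$ extends uniquely to a smooth function of $(u,\delta)\in[0,1]\times[0,\varepsilon)$.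
   Context: Setting. $G$ is a finite nonempty set of genetic sites. A state is $\mathbf{x}\in\{0,1\}^G$; $\mathbf{1}_S$ has $x_g=1$ iff $g\in S$; $\mathbf{a}=\mathbf{1}_\emptyset$, $\mathbf{A}=\mathbf{1}_G$. A replacement event is $(R,\alpha)$ with $R\subseteq G$, $\alpha:R\to G$; a replacement rule gives for each state a probability distribution $\{p_{(R,\alpha)}(\mathbf{x})\}$ over events. With mutation probability $u\in[0,1]$ and bias $\nu\in(0,1)$, the evolutionary Markov chain moves from $\mathbf{x}$: draw $(R,\alpha)$ with probability $p_{(R,\alpha)}(\mathbf{x})$; independently for $g\in R$, $x'_g=x_{\alpha(g)}$ w.p. $1-u$, $x'_g=1$ w.p. $u\nu$, $x'_g=0$ w.p. $u(1-\nu)$; $x'_g=x_g$ for $g\notin R$. Fixation Axiom: there exist $g\in G$, $m\ge1$, events $(R_k,\alpha_k)_{k=1}^m$ with $p_{(R_k,\alpha_k)}(\mathbf{x})>0$ for all $k,\mathbf{x}$, $g\in R_k$ for some $k$, and $\tilde\alpha_1\circ\cdots\circ\tilde\alpha_m(h)=g$ for all $h$, where $\tilde\alpha_k$ equals $\alpha_k$ on $R_k$ and the identity elsewhere. $e_{gh}(\mathbf{x})=\sum_{(R,\alpha):h\in R,\alpha(h)=g}p_{(R,\alpha)}(\mathbf{x})$, $b_g=\sum_he_{gh}$, $d_g=\sum_he_{hg}$, $b=\sum_gb_g$. Fixation probabilities (at $u=0$): $\mu_A(\mathbf{1}_{\{g\}})=d_g(\mathbf{a})/b(\mathbf{a})$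 (zero elsewhere), $\mu_a(\mathbf{1}_{G\setminus\{g\}})=d_g(\mathbf{A})/b(\mathbf{A})$ (zero elsewhere), $\rho_A=\sum_\mathbf{x}\mu_A(\mathbf{x})\lim_tP^{(t)}_{\mathbf{x}\to\mathbf{A}}$, $\rho_a=\sum_\mathbf{x}\mu_a(\mathbf{x})\lim_tP^{(t)}_{\mathbf{x}\to\mathbf{a}}$. For $u>0$, $\pi_{\mathrm{MSS}}$ is the unique stationary distribution (probability $\mathbb{P}_{\mathrm{MSS}}$, random state $\mathbf{X}$); $\pi_{\mathrm{RMC}}(\mathbf{x})=\lim_{u\to0}\pi_{\mathrm{MSS}}(\mathbf{x})/(1-\pi_{\mathrm{MSS}}(\mathbf{a})-\pi_{\mathrm{MSS}}(\mathbf{A}))$ for $\mathbf{x}\notin\{\mathbf{a},\mathbf{A}\}$. Assumption 2 (weak selection): for each event, $p_{(R,\alpha)}(\mathbf{x})$ varies smoothly with $\delta\in[0,\varepsilon)$ for each state $\mathbf{x}$, and at $\delta=0$ it is independent of $\mathbf{x}$. *)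

(* Defs.v *)
From HB Require Import structures.
From mathcomp Require Import all_boot all_order all_algebra.
From mathcomp Require Import all_classical all_reals all_analysis.
Set Implicit Arguments. Unset Strict Implicit. Unset Printing Implicit Defensive.
Import Order.TTheory GRing.Theory Num.Theory.
Import numFieldNormedType.Exports.
Local Open Scope classical_set_scope.
Local Open Scope ring_scope.

Section Model.
Variable G : finType.

Definition state := {ffun G -> bool}.
Definition ind (S : {set G}) : state := [ffun g => g \in S].
Definition st_a : state := ind finset.set0.
Definition st_A : state := ind [set: G].

(* A replacement event (R, alpha), R ⊆ G, alpha : R -> G, encoded as
   e : G -> option G with R = {g | e g <> None} and alpha g = the value. *)
Definition event := {ffun G -> option G}.
Definition evR (e : event) : {set G} := [set g | e g != None].
Definition alpha_tilde (e : event) (h : G) : G :=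
  if e h is Some g then g else h.
Definition comp_tilde (s : seq event) : G -> G :=
  foldr (fun e f => alpha_tilde e \o f) id s.

Variable R : realType.

Definition rule := event -> state -> R.

Definition is_rule (p : rule) : Prop :=
  forall x, (forall e, 0 <= p e x) /\ \sum_(e : event) p e x = 1.

Definition fixation_axiom (p : rule) : Prop :=
  exists g : G, exists s : seq event,
    s != [::] /\
    (forall e, e \in s -> forall x, 0 < p e x) /\
    (exists2 e, e \in s & g \in evR e) /\
    (forall h, comp_tilde s h = g).

Definition e_gh (p : rule) (g h : G) (x : state) : R :=
  \sum_(e : event | e h == Some g) p e x.
Definition b_g (p : rule) g x : R := \sum_(h : G) e_gh p g h x.
Definition d_g (p : rule) g x : R := \sum_(h : G) e_gh p h g x.
Definition b_tot (p : rule) x : R := \sum_(g : G) b_g p g x.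

(* one-site update probability: site g in R copying from alpha(g) = i *)
Definition site_prob (u nu : R) (xi : bool) (b : bool) : R :=
  (1 - u) * (xi == b)%:R + u * nu * b%:R + u * (1 - nu) * (~~ b)%:R.

Definition trans (p : rule) (u nu : R) (x y : state) : R :=
  \sum_(e : event) p e x *
    \prod_(g : G) (if e g is Some i then site_prob u nu (x i) (y g)
                   else (x g == y g)%:R).

Fixpoint trans_t (p : rule) (u nu : R) (t : nat) (x y : state) : R :=
  if t is t'.+1 then \sum_(z : state) trans_t p u nu t' x z * trans p u nu z y
  else (x == y)%:R.

Definition mu_A (p : rule) (x : state) : R :=
  \sum_(g : G) (x == ind [set g])%:R * (d_g p g st_a / b_tot p st_a).
Definition mu_a (p : rule) (x : state) : R :=
  \sum_(g : G) (x == ind (~: [set g]))%:R * (d_g p g st_A / b_tot p st_A).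
Definition rho_A (p : rule) (nu : R) : R :=
  \sum_(x : state) mu_A p x * limn (fun t => trans_t p 0 nu t x st_A).
Definition rho_a (p : rule) (nu : R) : R :=
  \sum_(x : state) mu_a p x * limn (fun t => trans_t p 0 nu t x st_a).

Definition stationary (p : rule) (u nu : R) (pi : state -> R) : Prop :=
  (forall x, 0 <= pi x) /\ \sum_(x : state) pi x = 1 /\
  (forall y, \sum_(x : state) pi x * trans p u nu x y = pi y).

End Model.

Section Smooth.
Variable R : realType.

Definition smooth_on_Ico (eps : R) (f : R -> R) : Prop :=
  exists U : set R, open U /\ `[0, eps[%classic `<=` U /\
  exists D : nat -> R -> R,
    (forall d, 0 <= d < eps -> D 0%N d = f d) /\
    (forall n d, U d -> is_derive d 1 (D n) (D n.+1 d)).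

Definition dom2 (eps : R) : set (R * R) :=
  [set z | 0 <= z.1 <= 1 /\ 0 <= z.2 < eps].

(* F (u, delta) is smooth (C^oo) on [0,1] x [0,eps): it agrees there with a
   function on an open set U containing [0,1] x [0,eps) having continuous
   partial derivatives of all orders; D i j is the partial derivative of
   order i in u and j in delta. *)
Definition smooth_on_dom2 (eps : R) (F : R -> R -> R) : Prop :=
  exists U : set (R * R), open U /\ dom2 eps `<=` U /\
  exists D : nat -> nat -> R -> R -> R,
    (forall z, dom2 eps z -> D 0%N 0%N z.1 z.2 = F z.1 z.2) /\
    (forall i j z, U z ->
       is_derive z.1 1 (fun s => D i j s z.2) (D i.+1 j z.1 z.2) /\
       is_derive z.2 1 (fun s => D i j z.1 s) (D i j.+1 z.1 z.2) /\
       {for z, continuous (fun q : R * R => D i j q.1 q.2)}).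

Definition extends_uniquely_smooth (eps : R) (f : R -> R -> R) : Prop :=
  (exists F, smooth_on_dom2 eps F /\
     forall u d, 0 < u <= 1 -> 0 <= d < eps -> F u d = f u d) /\
  (forall F1 F2,
     smooth_on_dom2 eps F1 -> (forall u d, 0 < u <= 1 -> 0 <= d < eps -> F1 u d = f u d) ->
     smooth_on_dom2 eps F2 -> (forall u d, 0 < u <= 1 -> 0 <= d < eps -> F2 u d = f u d) ->
     forall z, dom2 eps z -> F1 z.1 z.2 = F2 z.1 z.2).
End Smooth.

(* Main.v *)
Require Import Defs.
From HB Require Import structures.
From mathcomp Require Import all_boot all_order all_algebra.
From mathcomp Require Import all_classical all_reals all_analysis.
From mathcomp Require Import fingroup perm.
From mathcomp Require Import ring lra.
Set Implicit Arguments. Unset Strict Implicit. Unset Printing Implicit Defensive.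
Import Order.TTheory GRing.Theory Num.Theory.
Import numFieldNormedType.Exports.
Local Open Scope classical_set_scope.
Local Open Scope ring_scope.

Section Basics.
Variable R : realType.
Lemma dcont (f : R -> R) (x df : R) : is_derive x 1 f df -> {for x, continuous f}.
Proof.
move=> H.
have : derivable f x 1 by apply: ex_derive.
move/derivable1_diffP. exact: differentiable_continuous.
Qed.
Lemma dAdd (f g : R -> R) (x df dg : R) : is_derive x 1 f df -> is_derive x 1 g dg -> is_derive x 1 (fun s => f s + g s) (df + dg).
Proof. move=> H1 H2. exact: is_deriveD. Qed.
Lemma dMul (f g : R -> R) (x df dg : R) : is_derive x 1 f df -> is_derive x 1 g dg -> is_derive x 1 (fun s => f s * g s) (df * g x + f x * dg).
Proof. move=> H1 H2. have H := is_deriveM H1 H2.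
eapply is_derive_eq. exact H. rewrite /GRing.scale /= addrC mulrC. done. Qed.
Lemma dInv (f : R -> R) (x df : R) : f x != 0 -> is_derive x 1 f df -> is_derive x 1 (fun s => (f s)^-1) (- (f x)^-2 * df).
Proof. move=> H1 H2. have H := is_deriveV H1 H2. eapply is_derive_eq. exact H. by []. Qed.
Lemma dId (x : R) : is_derive x 1 (fun s : R => s) 1.
Proof. exact: is_derive_id. Qed.
Lemma dCst (c x : R) : is_derive x 1 (fun s : R => c) 0.
Proof. exact: is_derive_cst. Qed.
Lemma derive_uniq (f : R -> R) (x d1 d2 : R) : is_derive x 1 f d1 -> is_derive x 1 f d2 -> d1 = d2.
Proof. move=> H1 H2. by rewrite -(@derive_val _ _ _ _ _ _ _ H1) (@derive_val _ _ _ _ _ _ _ H2). Qed.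
Lemma derive_near (f g : R -> R) (x d1 d2 : R) : (\forall s \near x, f s = g s) ->
  is_derive x 1 f d1 -> is_derive x 1 g d2 -> d1 = d2.
Proof. move=> N H1 H2. have H3 := near_eq_is_derive N H1. exact: derive_uniq H3 H2. Qed.
End Basics.

Section Cont.
Variable R : realType.
Lemma c1 (z : R * R) : {for z, continuous (fun q : R * R => q.1)}.
Proof. exact: cvg_fst. Qed.
Lemma c2 (z : R * R) : {for z, continuous (fun q : R * R => q.2)}.
Proof. exact: cvg_snd. Qed.
Lemma c3 (z : R * R) (f g : R * R -> R) : {for z, continuous f} -> {for z, continuous g} -> {for z, continuous (fun q => f q * g q)}.
Proof. move=> H1 H2. exact: cvgM. Qed.
Lemma c4 (z : R * R) (f g : R * R -> R) : {for z, continuous f} -> {for z, continuous g} -> {for z, continuous (fun q => f q + g q)}.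
Proof. move=> H1 H2. exact: cvgD. Qed.
Lemma c5 (z : R * R) (f : R * R -> R) : f z != 0 -> {for z, continuous f} -> {for z, continuous (fun q => (f q)^-1)}.
Proof. move=> H1 H2. exact: cvgV. Qed.
Lemma c6 (z : R * R) (c : R) : {for z, continuous (fun q : R*R => c)}.
Proof. exact: cvg_cst. Qed.
Lemma c7 (z : R * R) (f : R -> R) : {for z.2, continuous f} -> {for z, continuous (fun q : R*R => f q.2)}.
Proof. move=> H. apply: (continuous_comp (f := fun q : R * R => q.2) (g := f)). exact: cvg_snd. exact: H. Qed.
Lemma c8 (y : R) : {for y, continuous (fun s : R => (0:R, s))}.
Proof. have := @cvg_pair _ _ _ (nbhs y) (nbhs (0:R)) (nbhs y) _ _ _ (fun=> 0) id (cvg_cst _) (@cvg_id _ _). exact. Qed.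
End Cont.

Section Expr.
Variable R : realType.
Variable K : Type.
Variable fam : K -> nat -> R -> R.
Variable V : set (R * R).
Hypothesis Vopen : open V.
Hypothesis famD : forall k n x y, V (x, y) -> is_derive y 1 (fam k n) (fam k n.+1 y).

Inductive ex := EU | EC of R | EA of K & nat | EAdd of ex & ex | EMul of ex & ex | EInv of ex.

Fixpoint ev (e : ex) (z : R * R) : R :=
  match e with
  | EU => z.1 | EC c => c | EA k n => fam k n z.2
  | EAdd a b => ev a z + ev b z | EMul a b => ev a z * ev b z
  | EInv a => (ev a z)^-1 end.

Fixpoint du (e : ex) : ex :=
  match e with
  | EU => EC 1 | EC _ => EC 0 | EA _ _ => EC 0
  | EAdd a b => EAdd (du a) (du b)
  | EMul a b => EAdd (EMul (du a) b) (EMul a (du b))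
  | EInv a => EMul (EC (-1)) (EMul (EInv a) (EMul (EInv a) (du a))) end.

Fixpoint dd (e : ex) : ex :=
  match e with
  | EU => EC 0 | EC _ => EC 0 | EA k n => EA k n.+1
  | EAdd a b => EAdd (dd a) (dd b)
  | EMul a b => EAdd (EMul (dd a) b) (EMul a (dd b))
  | EInv a => EMul (EC (-1)) (EMul (EInv a) (EMul (EInv a) (dd a))) end.

Fixpoint wf (e : ex) : Prop :=
  match e with
  | EAdd a b => wf a /\ wf b | EMul a b => wf a /\ wf b
  | EInv a => wf a /\ (forall z, V z -> ev a z != 0)
  | _ => True end.

Lemma wf_du e : wf e -> wf (du e).
Proof.
elim: e => //=.
- move=> a IHa b IHb [wa wb]; split; [exact: IHa|exact: IHb].
- move=> a IHa b IHb [wa wb]; do !split => //; [exact: IHa|exact: IHb].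
- move=> a IHa [wa na]; do !split => //; exact: IHa.
Qed.
Lemma wf_dd e : wf e -> wf (dd e).
Proof.
elim: e => //=.
- move=> a IHa b IHb [wa wb]; split; [exact: IHa|exact: IHb].
- move=> a IHa b IHb [wa wb]; do !split => //; [exact: IHa|exact: IHb].
- move=> a IHa [wa na]; do !split => //; exact: IHa.
Qed.
Lemma wf_iter_du i e : wf e -> wf (iter i du e).
Proof. by elim: i => //= i IH /IH /wf_du. Qed.
Lemma wf_iter_dd i e : wf e -> wf (iter i dd e).
Proof. by elim: i => //= i IH /IH /wf_dd. Qed.

Lemma ev_du e x y : wf e -> V (x, y) -> is_derive x 1 (fun s => ev e (s, y)) (ev (du e) (x, y)).
Proof.
move=> + Vz; elim: e => /=.
- move=> _; exact: dId.
- move=> c _; exact: dCst.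
- move=> k n _; exact: dCst.
- move=> a IHa b IHb [wa wb]; exact: dAdd (IHa wa) (IHb wb).
- move=> a IHa b IHb [wa wb]; exact: dMul (IHa wa) (IHb wb).
- move=> a IHa [wa na]. apply: is_derive_eq. apply: dInv (IHa wa). exact: na.
  by rewrite -exprVn expr2 mulN1r mulNr mulrA.
Qed.

Lemma ev_dd e x y : wf e -> V (x, y) -> is_derive y 1 (fun s => ev e (x, s)) (ev (dd e) (x, y)).
Proof.
move=> + Vz; elim: e => /=.
- move=> _; exact: dCst.
- move=> c _; exact: dCst.
- move=> k n _; exact: (@famD k n _ _ Vz).
- move=> a IHa b IHb [wa wb]; exact: dAdd (IHa wa) (IHb wb).
- move=> a IHa b IHb [wa wb]; exact: dMul (IHa wa) (IHb wb).
- move=> a IHa [wa na]. apply: is_derive_eq. apply: dInv (IHa wa). exact: na.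
  by rewrite -exprVn expr2 mulN1r mulNr mulrA.
Qed.

Lemma ev_comm e z : wf e -> V z -> ev (dd (du e)) z = ev (du (dd e)) z.
Proof.
move=> + Vz; elim: e => //=.
- by move=> a IHa b IHb [wa wb]; rewrite IHa // IHb.
- move=> a IHa b IHb [wa wb]; rewrite IHa // IHb //. ring.
- move=> a IHa [wa na]; rewrite IHa //. ring.
Qed.

Lemma ev_cont e z : wf e -> V z -> {for z, continuous (ev e)}.
Proof.
move=> + Vz; elim: e => /=.
- move=> _; exact: c1.
- move=> c _; exact: c6.
- move=> k n _; apply: c7. case: z Vz => x y Vz. exact: dcont (@famD k n _ _ Vz).
- move=> a IHa b IHb [wa wb]; exact: c4 (IHa wa) (IHb wb).
- move=> a IHa b IHb [wa wb]; exact: c3 (IHa wa) (IHb wb).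
- move=> a IHa [wa na]; apply: c5 (IHa wa). exact: na.
Qed.

Lemma near_V x y : V (x, y) -> \forall s \near x, V (s, y).
Proof.
move=> Vz.
have N : nbhs (x, y) V by exact: Vopen.
have C : {for x, continuous (fun s : R => (s, y))}.
  have := @cvg_pair _ _ _ (nbhs x) (nbhs x) (nbhs y) _ _ _ id (fun=> y) (@cvg_id _ _) (cvg_cst _). exact.
exact: C N.
Qed.

Lemma near_V2 x y : V (x, y) -> \forall s \near y, V (x, s).
Proof.
move=> Vz.
have N : nbhs (x, y) V by exact: Vopen.
have C : {for y, continuous (fun s : R => (x, s))}.
  have := @cvg_pair _ _ _ (nbhs y) (nbhs x) (nbhs y) _ _ _ (fun=> x) id (cvg_cst _) (@cvg_id _ _). exact.
exact: C N.
Qed.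

Lemma ev_iter_comm i e x y : wf e -> V (x, y) ->
  ev (dd (iter i du e)) (x, y) = ev (iter i du (dd e)) (x, y).
Proof.
elim: i x y => [//|i IH] x y we Vz /=.
rewrite ev_comm //; last exact: wf_iter_du.
apply: (@derive_near _ (fun s => ev (dd (iter i du e)) (s, y)) (fun s => ev (iter i du (dd e)) (s, y)) x).
- near=> s. apply: IH => //. near: s. exact: near_V.
- apply: ev_du => //. apply: wf_dd. exact: wf_iter_du.
- apply: ev_du => //. apply: wf_iter_du. exact: wf_dd.
Unshelve. all: by end_near.
Qed.

Definition DD e (i j : nat) (x y : R) : R := ev (iter i du (iter j dd e)) (x, y).

Lemma DD_smooth e : wf e -> forall i j (z : R * R), V z ->
  is_derive z.1 1 (fun s => DD e i j s z.2) (DD e i.+1 j z.1 z.2) /\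
  is_derive z.2 1 (fun s => DD e i j z.1 s) (DD e i j.+1 z.1 z.2) /\
  {for z, continuous (fun q : R * R => DD e i j q.1 q.2)}.
Proof.
move=> we i j [x y] Vz /=; split; [|split].
- apply: ev_du => //. apply: wf_iter_du. exact: wf_iter_dd.
- rewrite /DD /= -ev_iter_comm //; last exact: wf_iter_dd.
  apply: ev_dd => //. apply: wf_iter_du. exact: wf_iter_dd.
- have -> : (fun q : R * R => DD e i j q.1 q.2) = ev (iter i du (iter j dd e)).
    by apply/funext => -[].
  apply: ev_cont => //. apply: wf_iter_du. exact: wf_iter_dd.
Qed.

Definition SE (f : R * R -> R) := exists e, wf e /\ forall z, V z -> ev e z = f z.

Lemma SE_ext f g : SE f -> (forall z, V z -> f z = g z) -> SE g.
Proof. move=> [e [we He]] H; exists e; split => // z Vz; by rewrite He // H. Qed.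
Lemma SE_cst c : SE (fun=> c).
Proof. by exists (EC c). Qed.
Lemma SE_fst : SE (fun z => z.1).
Proof. by exists EU. Qed.
Lemma SE_atom k : SE (fun z => fam k 0 z.2).
Proof. by exists (EA k 0). Qed.
Lemma SE_add f g : SE f -> SE g -> SE (fun z => f z + g z).
Proof. move=> [a [wa Ha]] [b [wb Hb]]; exists (EAdd a b); split => //= z Vz; by rewrite Ha // Hb. Qed.
Lemma SE_mul f g : SE f -> SE g -> SE (fun z => f z * g z).
Proof. move=> [a [wa Ha]] [b [wb Hb]]; exists (EMul a b); split => //= z Vz; by rewrite Ha // Hb. Qed.
Lemma SE_inv f : SE f -> (forall z, V z -> f z != 0) -> SE (fun z => (f z)^-1).
Proof. move=> [a [wa Ha]] nz; exists (EInv a); split => /= [|z Vz]; last by rewrite Ha.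
split => // z Vz; rewrite Ha //; exact: nz. Qed.
Lemma SE_opp f : SE f -> SE (fun z => - f z).
Proof. move=> H; have H2 := SE_mul (SE_cst (-1)) H. apply: (SE_ext H2) => z _ /=; by rewrite mulN1r. Qed.
Lemma SE_sub f g : SE f -> SE g -> SE (fun z => f z - g z).
Proof. move=> H1 H2; exact: SE_add H1 (SE_opp H2). Qed.
Lemma SE_div f g : SE f -> SE g -> (forall z, V z -> g z != 0) -> SE (fun z => f z / g z).
Proof. move=> H1 H2 nz; exact: SE_mul H1 (SE_inv H2 nz). Qed.
Lemma SE_sum (I : Type) (r : seq I) (P : pred I) (F : I -> R * R -> R) :
  (forall i, P i -> SE (F i)) -> SE (fun z => \sum_(i <- r | P i) F i z).
Proof.
move=> H; elim: r => [|i r IH].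
  by apply: (SE_ext (SE_cst 0)) => z _; rewrite big_nil.
case Pi: (P i).
  by apply: (SE_ext (SE_add (H i Pi) IH)) => z _; rewrite big_cons Pi.
by apply: (SE_ext IH) => z _; rewrite big_cons Pi.
Qed.
Lemma SE_prod (I : Type) (r : seq I) (P : pred I) (F : I -> R * R -> R) :
  (forall i, P i -> SE (F i)) -> SE (fun z => \prod_(i <- r | P i) F i z).
Proof.
move=> H; elim: r => [|i r IH].
  by apply: (SE_ext (SE_cst 1)) => z _; rewrite big_nil.
case Pi: (P i).
  by apply: (SE_ext (SE_mul (H i Pi) IH)) => z _; rewrite big_cons Pi.
by apply: (SE_ext IH) => z _; rewrite big_cons Pi.
Qed.
Lemma SE_det n (M : R * R -> 'M[R]_n) : (forall i j, SE (fun z => M z i j)) -> SE (fun z => \det (M z)).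
Proof.
move=> H. apply: SE_sum => s _. apply: SE_mul; first exact: SE_cst.
apply: SE_prod => i _; exact: H.
Qed.
Lemma SE_adj n (M : R * R -> 'M[R]_n) : (forall i j, SE (fun z => M z i j)) ->
  forall i j, SE (fun z => \adj (M z) i j).
Proof.
move=> H i j. apply: SE_ext.
  apply: SE_mul; first exact: (SE_cst ((-1) ^+ (j + i))).
  apply: (@SE_det _ (fun z => row' j (col' i (M z)))) => k l.
  apply: (SE_ext (H (lift j k) (lift i l))) => z _; by rewrite !mxE.
by move=> z _; rewrite !mxE /cofactor.
Qed.

Lemma SE_smooth f : SE f -> exists D : nat -> nat -> R -> R -> R,
  (forall z, V z -> D 0%N 0%N z.1 z.2 = f z) /\
  (forall i j (z : R * R), V z ->
    is_derive z.1 1 (fun s => D i j s z.2) (D i.+1 j z.1 z.2) /\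
    is_derive z.2 1 (fun s => D i j z.1 s) (D i j.+1 z.1 z.2) /\
    {for z, continuous (fun q : R * R => D i j q.1 q.2)}).
Proof.
move=> [e [we He]]; exists (DD e); split; last exact: DD_smooth.
by move=> [x y] Vz; rewrite /DD /= He.
Qed.
End Expr.
Section Lap.
Variable R : realType.
Variable T : finType.
Variable rho : T -> T -> R.
Hypothesis rho_ge0 : forall x y, x != y -> 0 <= rho x y.

Definition KK x y := if x == y then \sum_(z | z != x) rho x z else - rho x y.
Definition colK (z : T -> R) y := \sum_x z x * KK x y.

Lemma KK_off x y : x != y -> KK x y = - rho x y.
Proof. by rewrite /KK => /negbTE ->. Qed.

Lemma KK_row x : \sum_y KK x y = 0.
Proof.
rewrite (bigD1 x) //=.
have -> : \sum_(y | y != x) KK x y = - \sum_(y | y != x) rho x y.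
  by rewrite -sumrN; apply: eq_bigr => y yx; apply: KK_off; rewrite eq_sym.
by rewrite /KK eqxx subrr.
Qed.

Lemma colK_sum z : \sum_y colK z y = 0.
Proof.
rewrite /colK exchange_big /=.
rewrite (eq_bigr (fun=> 0)) ?big1 // => x _.
by rewrite -mulr_sumr KK_row mulr0.
Qed.

Lemma colK_eq z y : colK z y = z y * \sum_(w | w != y) rho y w - \sum_(x | x != y) z x * rho x y.
Proof.
rewrite /colK (bigD1 y) //= {1}/KK eqxx; congr (_ + _).
rewrite -sumrN; apply: eq_bigr => x xy; by rewrite KK_off // mulrN.
Qed.

Lemma colK_lin (f g : T -> R) (s : R) y : colK (fun x => f x - s * g x) y = colK f y - s * colK g y.
Proof.
rewrite /colK mulr_sumr -sumrB; apply: eq_bigr => x _; ring.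
Qed.

Lemma abs_ker z : (forall y, colK z y = 0) -> forall y, colK (fun x => `|z x|) y = 0.
Proof.
move=> H.
have le0 : forall y, colK (fun x => `|z x|) y <= 0.
  move=> y; rewrite colK_eq subr_le0.
  have Sy : 0 <= \sum_(w | w != y) rho y w by apply: sumr_ge0 => w; rewrite eq_sym; exact: rho_ge0.
  have := H y; rewrite colK_eq => /eqP; rewrite subr_eq0 => /eqP E.
  rewrite -(ger0_norm Sy) -normrM E.
  apply: le_trans (ler_norm_sum _ _ _) _.
  apply: ler_sum => x xy; rewrite normrM (ger0_norm (rho_ge0 xy)) //.
have S0 : \sum_y (- colK (fun x => `|z x|) y) = 0 by rewrite sumrN colK_sum oppr0.
move=> y; apply/eqP; rewrite -oppr_eq0; apply/eqP.
apply: (psumr_eq0P _ S0) => // i _; rewrite oppr_ge0; exact: le0.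
Qed.

Lemma supp_closed (nu : T -> R) : (forall x, 0 <= nu x) -> (forall y, colK nu y = 0) ->
  forall x y, 0 < nu x -> x != y -> 0 < rho x y -> 0 < nu y.
Proof.
move=> nn H x y nx xy rxy; rewrite lt_def nn andbT; apply/negP => /eqP ny.
have := H y; rewrite colK_eq ny mul0r sub0r => /eqP; rewrite oppr_eq0 => /eqP S0.
have nn' : forall i, i != y -> 0 <= nu i * rho i y.
  move=> i iy; apply: mulr_ge0 => //; exact: rho_ge0.
have := psumr_eq0P nn' S0 xy => /eqP; rewrite mulf_eq0 => /orP [/eqP E|/eqP E].
  by move: nx; rewrite E ltxx.
by move: rxy; rewrite E ltxx.
Qed.

Definition reach (a : T) := forall P : pred T,
  (forall x y, P x -> x != y -> 0 < rho x y -> P y) -> forall x, P x -> P a.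

Lemma ker0 a : reach a -> forall nu : T -> R, (forall x, 0 <= nu x) -> (forall y, colK nu y = 0) ->
  nu a = 0 -> forall x, nu x = 0.
Proof.
move=> ra nu nn H na x; apply/eqP; rewrite eq_le nn andbT leNgt; apply/negP => nx.
have cl : forall x y, 0 < nu x -> x != y -> 0 < rho x y -> 0 < nu y by exact: supp_closed.
have := ra (fun x => 0 < nu x) cl x nx. by rewrite /= na ltxx.
Qed.

Lemma signed a : reach a -> forall z, (forall y, colK z y = 0) ->
  exists s : R, (s = 1 \/ s = -1) /\ forall x, `|z x| = s * z x.
Proof.
move=> ra z H.
pose s : R := if 0 <= z a then 1 else -1.
have sn : forall x, s * z x <= `|z x|.
  move=> x; rewrite /s; case: ifP => _; rewrite ?mul1r ?mulN1r; [exact: ler_norm|].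
  by rewrite -normrN ler_norm.
have mu0 := ker0 ra (nu := fun x => `|z x| - s * z x).
exists s; split; first by rewrite /s; case: ifP; [left|right].
move=> x; apply/eqP; rewrite -subr_eq0; apply/eqP; apply: mu0.
- by move=> y; rewrite subr_ge0.
- move=> y; rewrite colK_lin abs_ker // H mulr0 subr0 //.
- rewrite /s; case: ifP => za; rewrite ?mul1r ?mulN1r.
    by rewrite ger0_norm // subrr.
  by rewrite ltr0_norm ?subrr // ltNge za.
Qed.

Variable a : T.
Variable w : T -> R.
Hypothesis w_ge0 : forall x, 0 <= w x.
Hypothesis wa_gt0 : 0 < w a.
Definition WW x y := if y == a then w x else KK x y.

Lemma colK_from_W z : (forall y, y != a -> \sum_x z x * WW x y = 0) -> forall y, colK z y = 0.
Proof.
move=> H.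
have H1 : forall y, y != a -> colK z y = 0.
  move=> y ya; rewrite -(H y ya); apply: eq_bigr => x _; by rewrite /WW (negbTE ya).
move=> y; case: (eqVneq y a) => [->|ya]; last exact: H1.
have := colK_sum z; rewrite (bigD1 a) //= big1 ?addr0 //.
Qed.

Lemma W_inj z : reach a -> (forall y, \sum_x z x * WW x y = 0) -> forall x, z x = 0.
Proof.
move=> ra H.
have cK := colK_from_W (fun y _ => H y).
have [s [s1 sE]] := signed ra cK.
have Hw : \sum_x `|z x| * w x = 0.
  rewrite (eq_bigr (fun x => s * (z x * w x))); last by move=> x _; rewrite sE mulrA.
  have Ha : \sum_x z x * w x = \sum_x z x * WW x a by apply: eq_bigr => x _; rewrite /WW eqxx.
  by rewrite -mulr_sumr Ha H mulr0.
have za : `|z a| = 0.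
  have nn : forall i, true -> 0 <= `|z i| * w i by move=> i _; apply: mulr_ge0.
  have := psumr_eq0P nn Hw (i := a) isT => /eqP; rewrite mulf_eq0 => /orP [/eqP //|].
  by rewrite gt_eqF.
move=> x; apply/eqP/normr0P.
exact: (ker0 ra (nu := fun x => `|z x|)) (abs_ker cK) za x.
Qed.

Lemma W_den z (C : pred T) x0 : reach a -> C a -> ~~ C x0 -> a != x0 -> 0 < rho a x0 ->
  (forall y, y != a -> \sum_x z x * WW x y = 0) -> \sum_x z x * WW x a = 1 ->
  \sum_(y | ~~ C y) z y != 0.
Proof.
move=> ra Ca Cx0 ax0 rx0 H H1.
have cK := colK_from_W H.
have [s [s1 sE]] := signed ra cK.
apply/negP => /eqP S0.
have S1 : \sum_(y | ~~ C y) `|z y| = 0.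
  by rewrite (eq_bigr (fun y => s * z y)) ?(sE) // -mulr_sumr S0 mulr0.
have zx0 : `|z x0| = 0.
  have nn : forall i, ~~ C i -> 0 <= `|z i| by move=> i _; exact: normr_ge0.
  exact: (psumr_eq0P nn S1 Cx0).
have cA := abs_ker cK.
have na : `|z a| = 0.
  apply/eqP; rewrite eq_le normr_ge0 andbT leNgt; apply/negP => pa.
  have nn : forall x, 0 <= `|z x| by move=> x; exact: normr_ge0.
  have := supp_closed (nu := fun x => `|z x|) nn cA pa ax0 rx0.
  by rewrite /= zx0 ltxx.
have z0 : forall x, z x = 0.
  by move=> x; apply/eqP/normr0P; exact: (ker0 ra (nu := fun x => `|z x|)) cA na x.
move: H1; rewrite big1 => [/eqP|x _]; first by rewrite eq_sym oner_eq0.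
by rewrite z0 mul0r.
Qed.
End Lap.
Section Markov.
Variable G : finType.
Variable R : realType.
Variable nu : R.
Hypothesis nu0 : 0 < nu.
Hypothesis nu1 : nu < 1.

Local Notation S := (state G).

Definition fac (u : R) (e : event G) (x y : S) (g : G) : R :=
  if e g is Some i then site_prob u nu (x i) (y g) else (x g == y g)%:R.

Lemma transE (r : rule G R) u x y : trans r u nu x y = \sum_e r e x * \prod_g fac u e x y g.
Proof. by []. Qed.

Lemma sp_ge0 u xi b : 0 <= u <= 1 -> 0 <= site_prob u nu xi b.
Proof.
case/andP => u0 u1; rewrite /site_prob.
have h1 : 0 <= 1 - u by rewrite subr_ge0.
have h2 : 0 <= 1 - nu by rewrite subr_ge0 ltW.
by rewrite !addr_ge0 // !mulr_ge0 // ltW.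
Qed.

Lemma sp_sum u xi : site_prob u nu xi true + site_prob u nu xi false = 1.
Proof. rewrite /site_prob; case: xi => /=; ring. Qed.

Lemma sp_same u b : 0 <= u <= 1 -> 0 < site_prob u nu b b.
Proof.
case/andP => u0 u1; rewrite /site_prob eqxx.
have h2 : 0 < 1 - nu by rewrite subr_gt0.
have h1 : 0 <= 1 - u by rewrite subr_ge0.
have h3 := mulr_ge0 h1 (ltW h2).
have h4 : 0 <= 1 - u by rewrite subr_ge0.
have h5 := mulr_ge0 h4 (ltW nu0).
case: b => /=; rewrite ?mulr1 ?mulr0 ?addr0. all: have := nu0; lra.
Qed.

Lemma fac_ge0 u e x y g : 0 <= u <= 1 -> 0 <= fac u e x y g.
Proof. by move=> u01; rewrite /fac; case: (e g) => [i|]; [exact: sp_ge0|exact: ler0n]. Qed.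

Variable r : rule G R.
Hypothesis r_ge0 : forall e x, 0 <= r e x.
Hypothesis r_sum : forall x, \sum_e r e x = 1.

Lemma trans_ge0 u x y : 0 <= u <= 1 -> 0 <= trans r u nu x y.
Proof.
move=> u01; rewrite transE; apply: sumr_ge0 => e _; apply: mulr_ge0 => //.
apply: prodr_ge0 => g _; exact: fac_ge0.
Qed.

Lemma trans_sum u x : \sum_y trans r u nu x y = 1.
Proof.
rewrite (eq_bigr (fun y => \sum_e r e x * \prod_g fac u e x y g)) // exchange_big /=.
rewrite -[RHS](r_sum x); apply: eq_bigr => e _.
rewrite -mulr_sumr.
have -> : \sum_(y : S) \prod_g fac u e x y g = \prod_g \sum_(b : bool) (if e g is Some i then site_prob u nu (x i) b else (x g == b)%:R).
  by rewrite bigA_distr_bigA.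
rewrite big1 ?mulr1 // => g _; rewrite big_bool /=.
case: (e g) => [i|]; first exact: sp_sum.
have [->|->] : x g = true \/ x g = false by case: (x g); [left|right]. all: by rewrite /= ?addr0 ?add0r.
Qed.

Lemma trans_ge_term u x y e : 0 <= u <= 1 -> r e x * \prod_g fac u e x y g <= trans r u nu x y.
Proof.
move=> u01; rewrite transE (bigD1 e) //= lerDl; apply: sumr_ge0 => e' _.
apply: mulr_ge0 => //; apply: prodr_ge0 => g _; exact: fac_ge0.
Qed.

Definition isC (x : S) := (x == st_a G) || (x == st_A G).

Lemma isC_const x : isC x -> forall i j, x i = x j.
Proof.
by case/orP => /eqP -> i j; rewrite /st_a /st_A /ind !ffunE ?inE.
Qed.

Definition pdfac (e : event G) (y : S) (g : G) : R :=
  if e g is Some _ then (if y g then nu else 1 - nu) else 0.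

Definition Pd (u : R) (x y : S) : R :=
  if [pick g | x g != y g] is Some g0 then
    \sum_e r e x * \prod_g (if g == g0 then pdfac e y g else fac u e x y g)
  else 0.

Lemma pdfac_ge0 e y g : 0 <= pdfac e y g.
Proof. rewrite /pdfac; case: (e g) => // _; case: (y g); [exact: ltW|by rewrite subr_ge0 ltW]. Qed.

Lemma Pd_ge0 (u : R) (x y : S) : 0 <= u <= 1 -> 0 <= Pd u x y.
Proof.
move=> u01; rewrite /Pd; case: pickP => // g0 _.
apply: sumr_ge0 => e _; apply: mulr_ge0 => //; apply: prodr_ge0 => g _.
case: ifP => _; [exact: pdfac_ge0|exact: fac_ge0].
Qed.

Lemma trans_Pd (u : R) (x y : S) : isC x -> x != y -> trans r u nu x y = u * Pd u x y.
Proof.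
move=> Cx xy; rewrite /Pd; case: pickP => [g0 Hg0|H]; last first.
  by case/negP: xy; apply/eqP/ffunP => g; have := H g => /negbFE/eqP.
rewrite transE mulr_sumr; apply: eq_bigr => e _.
rewrite mulrCA; congr (_ * _).
rewrite (bigD1 g0) //= [in RHS](bigD1 g0) //= eqxx mulrA; congr (_ * _).
  rewrite /fac /pdfac; case: (e g0) => [i|].
    rewrite (isC_const Cx i g0) /site_prob.
    by case: (x g0) Hg0; case: (y g0) => //= _; ring.
  by rewrite (negbTE Hg0) mulr0.
apply: eq_bigr => g /negbTE ->; done.
Qed.

Definition rr (u : R) (x y : S) : R := if isC x then Pd u x y else trans r u nu x y.

Lemma rr_ge0 (u : R) (x y : S) : 0 <= u <= 1 -> 0 <= rr u x y.
Proof. by move=> u01; rewrite /rr; case: ifP => _; [exact: Pd_ge0|exact: trans_ge0]. Qed.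

Lemma Pd_ge_term (u : R) (x y : S) (g0 : G) (e : event G) : 0 <= u <= 1 -> [pick g | x g != y g] = Some g0 ->
  r e x * \prod_g (if g == g0 then pdfac e y g else fac u e x y g) <= Pd u x y.
Proof.
move=> u01 P; rewrite /Pd P (bigD1 e) //= lerDl; apply: sumr_ge0 => e' _.
apply: mulr_ge0 => //; apply: prodr_ge0 => g _.
case: ifP => _; [exact: pdfac_ge0|exact: fac_ge0].
Qed.

Lemma Pd_pos (u : R) (x y : S) (g : G) (e : event G) : 0 <= u <= 1 -> isC x -> (forall h, h != g -> x h = y h) -> x g != y g ->
  0 < r e x -> e g != None -> 0 < Pd u x y.
Proof.
move=> u01 Cx same diff rpos eg.
have P : [pick g' | x g' != y g'] = Some g.
  case: pickP => [g' Hg'|H]; last by move: (H g); rewrite diff.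
  case: (eqVneq g' g) => [->//|ng]; by move: Hg'; rewrite same // eqxx.
apply: lt_le_trans (Pd_ge_term e u01 P); apply: mulr_gt0 => //.
apply: prodr_gt0 => h _; case: ifP => [/eqP ->|/negbT hg].
  rewrite /pdfac; case: (e g) eg => // i _; case: (y g) => //; by rewrite subr_gt0.
rewrite /fac -(same h hg); case: (e h) => [i|]; last by rewrite eqxx ltr01.
rewrite (isC_const Cx i h); exact: sp_same.
Qed.

Definition upd0 (e : event G) (x : S) : S := [ffun h => if e h is Some _ then false else x h].
Definition updc (e : event G) (x : S) : S := [ffun h => x (alpha_tilde e h)].

Lemma foldc s x h : (foldl (fun x e => updc e x) x s) h = x (comp_tilde s h).
Proof.
elim: s x => [//|e s IH] x /=; by rewrite IH ffunE.
Qed.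

Lemma fold0 s x h : (foldl (fun x e => upd0 e x) x s) h =
  if has (fun e : event G => e h != None) s then false else x h.
Proof.
elim: s x => [//|e s IH] x /=; rewrite IH ffunE.
by case: (e h) => [i|] //=; case: ifP.
Qed.

Lemma comp_none s h : all (fun e : event G => e h == None) s -> comp_tilde s h = h.
Proof.
elim: s => [//|e s IH] /= /andP [/eqP eh /IH] E.
by rewrite E /alpha_tilde eh.
Qed.

Lemma updc_C (e : event G) (x : S) : isC x -> updc e x = x.
Proof. move=> Cx; apply/ffunP => h; rewrite ffunE; exact: isC_const. Qed.

Lemma step0 (u : R) (e : event G) (x : S) : 0 < u <= 1 -> 0 < r e x -> x != upd0 e x -> 0 < rr u x (upd0 e x).
Proof.
case/andP => u0 u1 rpos xy.
have u01 : 0 <= u <= 1 by rewrite ltW.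
have tpos : 0 < trans r u nu x (upd0 e x).
  apply: lt_le_trans (trans_ge_term _ _ e u01); apply: mulr_gt0 => //.
  apply: prodr_gt0 => g _; rewrite /fac ffunE; case: (e g) => [i|]; last by rewrite eqxx ltr01.
  rewrite /site_prob /=.
  have h1 : 0 <= (1 - u) * (x i == false)%:R by rewrite mulr_ge0 ?subr_ge0.
  have h2 : 0 < u * (1 - nu) * 1 by rewrite mulr1 mulr_gt0 // subr_gt0.
  by rewrite mulr0 addr0 ltr_wpDl.
rewrite /rr; case: ifP => // Cx.
by move: tpos; rewrite trans_Pd // pmulr_rgt0.
Qed.

Lemma stepc (e : event G) (x : S) : 0 < r e x -> ~~ isC x -> x != updc e x -> 0 < rr 0 x (updc e x).
Proof.
move=> rpos Cx xy; rewrite /rr (negbTE Cx).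
have u01 : 0 <= (0:R) <= (1:R) by rewrite lexx ler01.
apply: lt_le_trans (trans_ge_term _ _ e u01); apply: mulr_gt0 => //.
apply: prodr_gt0 => g _; rewrite /fac ffunE /alpha_tilde; case: (e g) => [i|]; last by rewrite eqxx ltr01.
by rewrite /site_prob eqxx !mul0r subr0 !addr0 mulr1 ltr01.
Qed.

Hypothesis fix_ax : fixation_axiom r.

Lemma reach_a (u : R) : 0 <= u <= 1 -> reach (rr u) (st_a G).
Proof.
move=> u01 P cl x Px.
have [g [s [sn0 [spos [[e0 e0s ge0] comp]]]]] := fix_ax.
have cover : forall h, has (fun e : event G => e h != None) s.
  move=> h; case H: (has _ s) => //.
  have Hn := negbT H; move/hasPn: Hn => Hn.
  have A : all (fun e : event G => e h == None) s.
    by apply/allP => e es; have := Hn e es; rewrite negbK.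
  have := comp_none A; rewrite comp => hg.
  have := Hn e0 e0s; rewrite -hg; rewrite /evR inE in ge0; by rewrite ge0.
case: (ltrP 0 u) => [u0|u0].
  have u01' : 0 < u <= 1 by rewrite u0; case/andP: u01.
  have Pf : forall s' x, {subset s' <= s} -> P x -> P (foldl (fun x e => upd0 e x) x s').
    elim => [//|e s' IH] y sub Py /=; apply: IH; first by move=> e' e's'; apply: sub; rewrite inE e's' orbT.
    case: (eqVneq y (upd0 e y)) => [<-//|ny]; apply: (cl y) => //.
    apply: step0 => //; apply: spos; apply: sub; exact: mem_head.
  have := Pf s x (fun _ h => h) Px.
  have -> // : foldl (fun x e => upd0 e x) x s = st_a G.
  by apply/ffunP => h; rewrite fold0 cover /st_a /ind ffunE inE.
have u00 : u = 0 by apply/eqP; rewrite eq_le u0; case/andP: u01.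
subst u.
have Pf : forall s' x, {subset s' <= s} -> P x -> P (foldl (fun x e => updc e x) x s').
  elim => [//|e s' IH] y sub Py /=; apply: IH; first by move=> e' e's'; apply: sub; rewrite inE e's' orbT.
  case: (eqVneq y (updc e y)) => [<-//|ny].
  case Cy: (isC y); first by rewrite updc_C.
  apply: (cl y) => //. apply: stepc => //; last by rewrite Cy.
  apply: spos; apply: sub; exact: mem_head.
have fin : forall y, P y -> P (if y g then st_A G else st_a G).
  move=> y Py; have := Pf s y (fun _ h => h) Py.
  have -> // : foldl (fun x e => updc e x) y s = (if y g then st_A G else st_a G).
  by apply/ffunP => h; rewrite foldc comp /st_a /st_A /ind; case: (y g); rewrite ffunE inE.
have := fin x Px; case: (x g) => // PA.
pose y : S := [ffun h => h != g].
have Py : P y.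
  apply: (cl (st_A G)) => //.
    by apply/eqP => /ffunP /(_ g); rewrite /y /st_A /ind !ffunE inE eqxx.
  rewrite /rr /isC eqxx orbT.
  apply: (Pd_pos (g := g) (e := e0)) => //.
  - by rewrite /isC eqxx orbT.
  - by move=> h hg; rewrite /y /st_A /ind !ffunE inE hg.
  - by rewrite /y /st_A /ind !ffunE inE eqxx.
  - by apply: spos.
  - by rewrite /evR inE in ge0.
have := fin y Py; by rewrite /y ffunE eqxx.
Qed.


Lemma sumI (F : S -> R) : \sum_(i < #|S|) F (enum_val i) = \sum_x F x.
Proof. rewrite [RHS](reindex (fun i : 'I_#|S| => enum_val i)) //. exact: onW_bij (@enum_val_bij S). Qed.

Definition wv (u : R) (x : S) : R := if isC x then 1 else u.
Definition WWu (u : R) := WW (rr u) (st_a G) (wv u).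
Definition Wm (u : R) : 'M[R]_#|S| := \matrix_(i, j) WWu u (enum_val i) (enum_val j).

Lemma wv_ge0 u x : 0 <= u -> 0 <= wv u x.
Proof. by rewrite /wv; case: ifP. Qed.

Lemma Wm_det (u : R) : 0 <= u <= 1 -> \det (Wm u) != 0.
Proof.
move=> u01; apply/negP => /det0P [v vn0 vW].
have u0 : 0 <= u by case/andP: u01.
pose z x := v 0 (enum_rank x).
have H : forall y, \sum_x z x * WWu u x y = 0.
  move=> y; transitivity ((v *m Wm u) 0 (enum_rank y)); last by rewrite vW mxE.
  rewrite mxE -sumI; apply: eq_bigr => i _; by rewrite /z enum_valK !mxE enum_rankK.
have wa : 0 < wv u (st_a G) by rewrite /wv /isC eqxx ltr01.
have z0 := @W_inj R S (rr u) (fun x y _ => rr_ge0 x y u01) (st_a G) (wv u)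
   (fun x => wv_ge0 x u0) wa z (reach_a u01) H.
case/negP: vn0; apply/eqP/rowP => i; rewrite !mxE.
by have := z0 (enum_val i); rewrite /z enum_valK.
Qed.

Lemma adj_row (M : 'M[R]_#|S|) (f : S -> R) (c : R) x :
  (\row_i f (enum_val i)) *m M = \row_j (c * (enum_val j == st_a G)%:R) ->
  f x * \det M = c * \adj M (enum_rank (st_a G)) (enum_rank x).
Proof.
move=> E.
have E2 := congr1 (fun N : 'M[R]_(1, #|S|) => (N *m \adj M) 0 (enum_rank x)) E.
rewrite mulrC; move: E2; rewrite /= -mulmxA mul_mx_adj mul_mx_scalar !mxE enum_rankK => ->.
rewrite (bigD1 (enum_rank (st_a G))) //= big1 ?addr0; first by rewrite !mxE enum_rankK eqxx mulr1.
move=> j nj; rewrite !mxE.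
have nj' : enum_val j != st_a G by apply: contra nj => /eqP <-; rewrite enum_valK.
by rewrite (negbTE nj') mulr0 mul0r.
Qed.
Lemma stat_formula u (pi : S -> R) : 0 < u <= 1 -> stationary r u nu pi ->
  forall x, pi x = (if isC x then 1 else u) * \adj (Wm u) (enum_rank (st_a G)) (enum_rank x) / \det (Wm u).
Proof.
move=> u01 [pi0 [pi1 pistat]] x.
have u0 : 0 < u by case/andP: u01.
have u01' : 0 <= u <= 1 by rewrite ltW //; case/andP: u01.
pose sg y : R := pi y * (if isC y then u else 1).
have key : forall x y, x != y -> sg x * rr u x y = pi x * trans r u nu x y.
  move=> x' y xy; rewrite /sg /rr; case: ifP => Cx; last by rewrite mulr1.
  by rewrite trans_Pd // mulrA.
have cK : forall y, colK (rr u) sg y = 0.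
  move=> y; rewrite colK_eq.
  have E0 : \sum_(x | x != y) sg x * rr u x y = \sum_(x | x != y) pi x * trans r u nu x y.
    by apply: eq_bigr => x' xy; exact: key.
  rewrite E0.
  have E1 : \sum_(w | w != y) rr u y w * sg y = \sum_(w | w != y) pi y * trans r u nu y w.
    by apply: eq_bigr => w yw; rewrite mulrC key // eq_sym.
  rewrite mulrC mulr_suml E1 -mulr_sumr.
  have E2 := trans_sum u y; rewrite (bigD1 y) //= in E2.
  have E3 := pistat y; rewrite (bigD1 y) //= in E3.
  have -> : \sum_(w | w != y) trans r u nu y w = 1 - trans r u nu y y by move: E2; lra.
  have -> : \sum_(x | x != y) pi x * trans r u nu x y = pi y - pi y * trans r u nu y y.
    by move: E3; lra.
  ring.
have E : (\row_i sg (enum_val i)) *m Wm u = \row_j (u * (enum_val j == st_a G)%:R).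
  apply/rowP => j; rewrite !mxE.
  rewrite (eq_bigr (fun i => sg (enum_val i) * WWu u (enum_val i) (enum_val j))); last by move=> i _; rewrite !mxE.
  rewrite (sumI (fun x => sg x * WWu u x (enum_val j))).
  case ja: (enum_val j == st_a G).
    transitivity (u * \sum_x pi x); last by rewrite pi1 !mulr1.
    rewrite mulr_sumr; apply: eq_bigr => x' _.
    by rewrite /WWu /WW ja /sg /wv; case: ifP => _; rewrite ?mulr1 ?mul1r // mulrC.
  transitivity (colK (rr u) sg (enum_val j)); last by rewrite cK mulr0.
  by rewrite /colK; apply: eq_bigr => x' _; rewrite /WWu /WW ja.
have := adj_row x E.
have dn := Wm_det u01'.
rewrite /sg; case: ifP => Cx.
  move=> H; apply: (mulIf (lt0r_neq0 u0)); apply: (mulIf dn).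
  rewrite H; field; exact: dn.
move=> H; apply: (mulIf dn); rewrite mulr1 in H; rewrite H; field; exact: dn.
Qed.

Lemma adjW_row u y : \sum_x \adj (Wm u) (enum_rank (st_a G)) (enum_rank x) * WWu u x y =
  \det (Wm u) * (y == st_a G)%:R.
Proof.
transitivity ((\adj (Wm u) *m Wm u) (enum_rank (st_a G)) (enum_rank y)); last first.
  by rewrite mul_adj_mx !mxE (inj_eq enum_rank_inj) eq_sym mulr_natr.
rewrite mxE -sumI; apply: eq_bigr => i _; by rewrite !mxE !enum_rankK enum_valK.
Qed.

Lemma G_nonempty : exists g : G, True.
Proof. by have [g _] := fix_ax; exists g. Qed.

Lemma a_neq_A : st_a G != st_A G.
Proof.
have [g _] := G_nonempty.
by apply/eqP => /ffunP /(_ g); rewrite /st_a /st_A /ind !ffunE !inE.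
Qed.

Lemma den_ne0 (u : R) (x0 : S) : 0 <= u <= 1 -> ~~ isC x0 ->
  \sum_(y | ~~ isC y) \adj (Wm u) (enum_rank (st_a G)) (enum_rank y) != 0.
Proof.
move=> u01 Cx0.
have [g [s [sn0 [spos [[e0 e0s ge0] comp]]]]] := fix_ax.
have [h hg] : exists h, h != g.
  case: (pickP (fun h => h != g)) => [h hg|H]; first by exists h.
  case/negP: Cx0.
  have same : forall h, x0 h = x0 g by move=> h; have := H h => /negbFE/eqP ->.
  rewrite /isC; case E: (x0 g); apply/orP; [right|left]; apply/eqP/ffunP => h';
    by rewrite same E /st_a /st_A /ind ffunE inE.
have u0 : 0 <= u by case/andP: u01.
have dn := Wm_det u01.
pose y1 : S := [ffun h => h == g].
pose z y := \adj (Wm u) (enum_rank (st_a G)) (enum_rank y) / \det (Wm u).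
have wa : 0 < wv u (st_a G) by rewrite /wv /isC eqxx ltr01.
have Ca : isC (st_a G) by rewrite /isC eqxx.
have Cy1 : ~~ isC y1.
  rewrite /isC negb_or; apply/andP; split; apply/eqP => /ffunP.
    by move/(_ g); rewrite /y1 /st_a /ind !ffunE inE eqxx.
  by move/(_ h); rewrite /y1 /st_A /ind !ffunE inE (negbTE hg).
have ay1 : st_a G != y1 by apply/eqP => /ffunP /(_ g); rewrite /y1 /st_a /ind !ffunE inE eqxx.
have rpos : 0 < rr u (st_a G) y1.
  rewrite /rr Ca; apply: (Pd_pos (g := g) (e := e0)) => //.
  - by move=> h' h'g; rewrite /y1 /st_a /ind !ffunE inE (negbTE h'g).
  - by rewrite /y1 /st_a /ind !ffunE inE eqxx.
  - exact: spos.
  - by rewrite /evR inE in ge0.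
have Hy : forall y, y != st_a G -> \sum_x z x * WWu u x y = 0.
  move=> y ya; rewrite /z.
  under eq_bigr => x _ do rewrite mulrAC.
  by rewrite -mulr_suml adjW_row (negbTE ya) mulr0 mul0r.
have Ha : \sum_x z x * WWu u x (st_a G) = 1.
  rewrite /z; under eq_bigr => x _ do rewrite mulrAC.
  by rewrite -mulr_suml adjW_row eqxx mulr1 divff.
have := @W_den R S (rr u) (fun x y _ => rr_ge0 x y u01) (st_a G) (wv u)
   z isC y1 (reach_a u01) Ca Cy1 ay1 rpos Hy Ha.
apply: contra => /eqP S0; rewrite /z -mulr_suml S0 mul0r //.
Qed.

Lemma ratio_formula u (pi : S -> R) x : 0 < u <= 1 -> stationary r u nu pi -> ~~ isC x ->
  pi x / (1 - pi (st_a G) - pi (st_A G)) =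
  \adj (Wm u) (enum_rank (st_a G)) (enum_rank x) / \sum_(y | ~~ isC y) \adj (Wm u) (enum_rank (st_a G)) (enum_rank y).
Proof.
move=> u01 st Cx.
have u01' : 0 <= u <= 1 by rewrite ltW //; case/andP: u01.
have u0 : u != 0 by rewrite gt_eqF //; case/andP: u01.
have dn := Wm_det u01'.
have dd := den_ne0 u01' Cx.
have [_ [pi1 _]] := st.
have Hs : 1 - pi (st_a G) - pi (st_A G) = \sum_(y | ~~ isC y) pi y.
  rewrite -pi1 (bigD1 (st_a G)) //= (bigD1 (st_A G)) /=; last by rewrite eq_sym a_neq_A.
  rewrite (eq_bigl (fun y => ~~ isC y)); first by ring.
  by move=> y; rewrite /isC negb_or andbC.
rewrite Hs (stat_formula u01 st x) (negbTE Cx).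
rewrite (eq_bigr (fun y => u / \det (Wm u) * \adj (Wm u) (enum_rank (st_a G)) (enum_rank y))); last first.
  by move=> y Cy; rewrite (stat_formula u01 st y) (negbTE Cy); field.
rewrite -mulr_sumr; field.
by rewrite u0 dn dd.
Qed.

Definition P0 (x y : S) : R := trans r 0 nu x y.

Lemma u0_01 : 0 <= (0:R) <= (1:R).
Proof. by rewrite lexx ler01. Qed.

Lemma P0_ge0 x y : 0 <= P0 x y.
Proof. exact: trans_ge0 u0_01. Qed.

Lemma P0_sum x : \sum_y P0 x y = 1.
Proof. exact: trans_sum. Qed.

Lemma P0_C c y : isC c -> P0 c y = (c == y)%:R.
Proof.
move=> Cc; case: (eqVneq c y) => [<-|cy]; last by rewrite /P0 trans_Pd // mul0r.
have := P0_sum c; rewrite (bigD1 c) //= big1 ?addr0 // => z zc.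
by rewrite /P0 trans_Pd // ?mul0r // eq_sym.
Qed.

Lemma reach_C (P : pred S) : (forall x y, P x -> ~~ isC x -> 0 < P0 x y -> P y) ->
  forall x, P x -> exists2 c, isC c & P c.
Proof.
move=> cl x Px.
have [g [s [sn0 [spos [[e0 e0s ge0] comp]]]]] := fix_ax.
have Pf : forall s' x, {subset s' <= s} -> P x ->
    P (foldl (fun x e => updc e x) x s') \/ exists2 c, isC c & P c.
  elim => [|e s' IH] y sub Py /=; first by left.
  case Cy: (isC y); first by right; exists y.
  apply: IH; first by move=> e' e's'; apply: sub; rewrite inE e's' orbT.
  case: (eqVneq y (updc e y)) => [<-//|ny].
  apply: (cl y) => //; first by rewrite Cy.
  have := stepc (spos e (sub e (mem_head _ _)) y) (negbT Cy) ny.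
  by rewrite /rr Cy.
case: (Pf s x (fun _ h => h) Px) => // Pfin.
exists (foldl (fun x e => updc e x) x s) => //.
rewrite /isC; case E: (x g); apply/orP; [right|left]; apply/eqP/ffunP => h;
  by rewrite foldc comp E /st_a /st_A /ind ffunE inE.
Qed.

Lemma harm_le0 (f : S -> R) : (forall x, isC x -> f x = 0) ->
  (forall x, ~~ isC x -> f x = \sum_y P0 x y * f y) -> forall x, f x <= 0.
Proof.
move=> fC fH.
case: (arg_maxP f (isT : predT (st_a G))) => xs _ Hxs.
suff : f xs <= 0 by move=> H x; apply: le_trans H; exact: Hxs.
rewrite leNgt; apply/negP => pos.
have cl : forall x y, f x == f xs -> ~~ isC x -> 0 < P0 x y -> f y == f xs.
  move=> x y /eqP fx Cx py.
  have E : \sum_z P0 x z * (f xs - f z) = 0.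
    under eq_bigr => z _ do rewrite mulrBr.
    by rewrite sumrB -mulr_suml P0_sum mul1r -fH // fx subrr.
  have nn : forall z, true -> 0 <= P0 x z * (f xs - f z).
    by move=> z _; apply: mulr_ge0; [exact: P0_ge0|rewrite subr_ge0; exact: Hxs].
  have := psumr_eq0P nn E (isT : true) (i := y) => /eqP; rewrite mulf_eq0 => /orP [|].
    by rewrite gt_eqF.
  by rewrite subr_eq0 eq_sym.
have [c Cc /eqP Pc] := reach_C cl (eqxx (f xs)).
by move: pos; rewrite -Pc fC // ltxx.
Qed.

Lemma harm0 (f : S -> R) : (forall x, isC x -> f x = 0) ->
  (forall x, ~~ isC x -> f x = \sum_y P0 x y * f y) -> forall x, f x = 0.
Proof.
move=> fC fH x; apply/eqP; rewrite eq_le harm_le0 //=.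
rewrite -oppr_le0; apply: (harm_le0 (f := fun x => - f x)).
  by move=> y Cy; rewrite fC // oppr0.
by move=> y Cy; rewrite fH // -sumrN; apply: eq_bigr => z _; rewrite mulrN.
Qed.

Definition Nf (x y : S) : R := (x == y)%:R - (if isC x then 0 else P0 x y).
Definition Nm : 'M[R]_#|S| := \matrix_(i, j) Nf (enum_val i) (enum_val j).

Lemma Nm_det : \det Nm != 0.
Proof.
rewrite -det_tr; apply/negP => /det0P [v vn0 vN].
pose f x := v 0 (enum_rank x).
have H : forall x, \sum_y Nf x y * f y = 0.
  move=> x; transitivity ((v *m Nm^T) 0 (enum_rank x)); last by rewrite vN mxE.
  rewrite mxE -sumI; apply: eq_bigr => i _; by rewrite /f enum_valK !mxE enum_rankK mulrC.
have Hx : forall x, \sum_y Nf x y * f y = f x - (if isC x then 0 else \sum_y P0 x y * f y).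
  move=> x; rewrite /Nf.
  under eq_bigr => y _ do rewrite mulrBl.
  rewrite sumrB (bigD1 x) //= eqxx mul1r big1 ?addr0; last by move=> y /negbTE; rewrite eq_sym => ->; rewrite mul0r.
  case Cx: (isC x); last by [].
  by rewrite big1 // => y _; rewrite mul0r.
have f0 := @harm0 f.
case/negP: vn0; apply/eqP/rowP => i; rewrite !mxE.
have -> : v 0 i = f (enum_val i) by rewrite /f enum_valK.
apply: f0.
  move=> x Cx; have := H x; rewrite Hx Cx subr0 //.
move=> x Cx; have := H x; rewrite Hx (negbTE Cx) => /eqP; rewrite subr_eq0 => /eqP //.
Qed.

Lemma trans_tS u t x y : trans_t r u nu t.+1 x y = \sum_z trans_t r u nu t x z * trans r u nu z y.
Proof. by []. Qed.

Lemma sum_delta_l (F : S -> R) x : \sum_z (x == z)%:R * F z = F x.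
Proof.
rewrite (bigD1 x) //= eqxx mul1r big1 ?addr0 // => z zx.
by rewrite eq_sym (negbTE zx) mul0r.
Qed.

Lemma sum_delta_r (F : S -> R) y : \sum_z F z * (z == y)%:R = F y.
Proof.
rewrite (bigD1 y) //= eqxx mulr1 big1 ?addr0 // => z zy.
by rewrite (negbTE zy) mulr0.
Qed.

Lemma trans_t_CK u t x y : trans_t r u nu t.+1 x y = \sum_z trans r u nu x z * trans_t r u nu t z y.
Proof.
elim: t x y => [|t IH] x y.
  rewrite trans_tS /=.
  rewrite (eq_bigr (fun z => (x == z)%:R * trans r u nu z y)) // sum_delta_l.
  by rewrite (eq_bigr (fun z => trans r u nu x z * (z == y)%:R)) // sum_delta_r.
rewrite trans_tS.
rewrite (eq_bigr (fun w => \sum_z trans r u nu x z * trans_t r u nu t z w * trans r u nu w y)); last first.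
  by move=> w _; rewrite IH mulr_suml.
rewrite exchange_big; apply: eq_bigr => z _.
by rewrite trans_tS mulr_sumr; apply: eq_bigr => w _; rewrite mulrA.
Qed.

Lemma trans_t_ge0 u t x y : 0 <= u <= 1 -> 0 <= trans_t r u nu t x y.
Proof.
move=> u01; elim: t x y => [|t IH] x y /=; first exact: ler0n.
apply: sumr_ge0 => z _; apply: mulr_ge0 => //; exact: trans_ge0.
Qed.

Lemma trans_t_sum u t x : \sum_y trans_t r u nu t x y = 1.
Proof.
elim: t x => [|t IH] x.
  rewrite (eq_bigr (fun y => (x == y)%:R * 1)) ?sum_delta_l // => y _; by rewrite mulr1.
rewrite (eq_bigr (fun y => \sum_z trans_t r u nu t x z * trans r u nu z y)) //.
rewrite exchange_big /= -[RHS](IH x); apply: eq_bigr => z _.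
by rewrite -mulr_sumr trans_sum mulr1.
Qed.

Lemma trans_t_C0 t c y : isC c -> trans_t r 0 nu t c y = (c == y)%:R.
Proof.
move=> Cc; elim: t => [//|t IH].
rewrite trans_t_CK (eq_bigr (fun z => (c == z)%:R * trans_t r 0 nu t z y)).
  by rewrite sum_delta_l.
by move=> z _; rewrite -P0_C.
Qed.

Lemma tt_mono c x t : isC c -> trans_t r 0 nu t x c <= trans_t r 0 nu t.+1 x c.
Proof.
move=> Cc; rewrite trans_tS (bigD1 c) //=.
have -> : trans r 0 nu c c = 1 by have := P0_C c Cc; rewrite /P0 eqxx.
rewrite mulr1 lerDl; apply: sumr_ge0 => z _; apply: mulr_ge0.
  exact: trans_t_ge0 u0_01.
exact: P0_ge0.
Qed.

Lemma tt_le1 t x y : trans_t r 0 nu t x y <= 1.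
Proof.
rewrite -(trans_t_sum 0 t x) (bigD1 y) //= lerDl; apply: sumr_ge0 => z _.
exact: trans_t_ge0 u0_01.
Qed.

Definition Lf (c x : S) : R := limn (fun t => trans_t r 0 nu t x c).

Lemma Lf_cvg c x : isC c -> (fun t => trans_t r 0 nu t x c) @ \oo --> Lf c x.
Proof.
move=> Cc.
have H : (fun t => trans_t r 0 nu t x c) @ \oo --> sup (range (fun t => trans_t r 0 nu t x c)).
  apply: nondecreasing_cvgn.
    by apply/nondecreasing_seqP => t; exact: tt_mono.
  by exists 1 => _ [t _ <-]; exact: tt_le1.
by rewrite /Lf (cvg_lim _ H).
Qed.

Lemma cvg_sumS (F : S -> nat -> R) (l : S -> R) :
  (forall z, F z @ \oo --> l z) -> (fun t => \sum_z F z t) @ \oo --> \sum_z l z.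
Proof.
move=> H.
suff : forall s : seq S, (fun t => \sum_(z <- s) F z t) @ \oo --> \sum_(z <- s) l z by apply.
elim => [|z s IH].
  rewrite big_nil; under eq_fun do rewrite big_nil; exact: cvg_cst.
rewrite big_cons; under eq_fun do rewrite big_cons.
exact: cvgD (H z) IH.
Qed.

Lemma Lf_harm c x : isC c -> Lf c x = \sum_z P0 x z * Lf c z.
Proof.
move=> Cc.
have H1 : (fun t => trans_t r 0 nu t.+1 x c) @ \oo --> Lf c x.
  have := @Lf_cvg c x Cc; by rewrite -cvg_shiftS.
have H2 : (fun t => \sum_z P0 x z * trans_t r 0 nu t z c) @ \oo --> \sum_z P0 x z * Lf c z.
  apply: cvg_sumS => z; apply: cvgM; [exact: cvg_cst|exact: Lf_cvg].
have E : (fun t => trans_t r 0 nu t.+1 x c) = (fun t => \sum_z P0 x z * trans_t r 0 nu t z c).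
  by apply/funext => t; rewrite trans_t_CK.
rewrite E in H1; exact: (cvg_unique _ H1 H2).
Qed.

Lemma Lf_C c x : isC c -> isC x -> Lf c x = (x == c)%:R.
Proof.
move=> Cc Cx; rewrite /Lf.
under eq_fun do rewrite trans_t_C0 //.
exact: lim_cst.
Qed.

Lemma Lf_formula c x : isC c -> Lf c x * \det Nm = \adj Nm (enum_rank x) (enum_rank c).
Proof.
move=> Cc.
pose Lc : 'cV[R]_#|S| := \col_k Lf c (enum_val k).
have E : Nm *m Lc = \col_j (enum_val j == c)%:R.
  apply/colP => j; rewrite !mxE.
  rewrite (eq_bigr (fun k => Nf (enum_val j) (enum_val k) * Lf c (enum_val k))); last by move=> k _; rewrite !mxE.
  rewrite (sumI (fun y => Nf (enum_val j) y * Lf c y)).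
  set x' := enum_val j.
  rewrite /Nf.
  under eq_bigr => y _ do rewrite mulrBl.
  rewrite sumrB (eq_bigr (fun y => (x' == y)%:R * Lf c y)) // sum_delta_l.
  case Cx: (isC x').
    rewrite big1 ?subr0; first exact: Lf_C.
    by move=> y _; rewrite mul0r.
  rewrite -Lf_harm // subrr.
  by apply/esym/eqP; rewrite pnatr_eq0 eqb0; apply/negP => /eqP E; move: Cx; rewrite E Cc.
have E2 := congr1 (fun M : 'cV[R]_#|S| => (\adj Nm *m M) (enum_rank x) 0) E.
move: E2; rewrite /= mulmxA mul_adj_mx mul_scalar_mx !mxE enum_rankK mulrC => ->.
rewrite (bigD1 (enum_rank c)) //= big1 ?addr0; first by rewrite !mxE enum_rankK eqxx mulr1.
move=> j nj; rewrite !mxE.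
have nj' : enum_val j != c by apply: contra nj => /eqP <-; rewrite enum_valK.
by rewrite (negbTE nj') mulr0.
Qed.

Lemma rho_A_formula : rho_A r nu = \sum_x mu_A r x * (\adj Nm (enum_rank x) (enum_rank (st_A G)) / \det Nm).
Proof.
apply: eq_bigr => x _; congr (_ * _).
have CA : isC (st_A G) by rewrite /isC eqxx orbT.
apply: (mulIf Nm_det); have := Lf_formula x CA; rewrite /Lf => ->; field; exact: Nm_det.
Qed.

Lemma rho_a_formula : rho_a r nu = \sum_x mu_a r x * (\adj Nm (enum_rank x) (enum_rank (st_a G)) / \det Nm).
Proof.
apply: eq_bigr => x _; congr (_ * _).
have Ca : isC (st_a G) by rewrite /isC eqxx.
apply: (mulIf Nm_det); have := Lf_formula x Ca; rewrite /Lf => ->; field; exact: Nm_det.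
Qed.

Lemma b_tot_pos x : 0 < b_tot r x.
Proof.
have [g [s [sn0 [spos [[e0 e0s ge0] comp]]]]] := fix_ax.
rewrite /evR inE in ge0.
case E: (e0 g) ge0 => [g'|] // _.
rewrite /b_tot (bigD1 g') //= ltr_wpDr //; first by apply: sumr_ge0 => i _; apply: sumr_ge0 => h _; apply: sumr_ge0.
rewrite /b_g (bigD1 g) //= ltr_wpDr //; first by apply: sumr_ge0 => h _; apply: sumr_ge0.
rewrite /e_gh (bigD1 e0) /=; last by rewrite E.
rewrite ltr_wpDr //; first by apply: sumr_ge0.
exact: spos.
Qed.
End Markov.
Section Glue.
Variable R : realType.
Variable K : Type.
Variable fam : K -> nat -> R -> R.

Lemma SE_cont (V : set (R * R)) f : open V ->
  (forall k n x y, V (x, y) -> is_derive y 1 (fam k n) (fam k n.+1 y)) ->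
  SE fam V f -> forall z, V z -> {for z, continuous f}.
Proof.
move=> oV fD [e [we He]] z Vz.
have C := ev_cont fD we Vz.
have N : \forall w \near z, ev fam e w = f w.
  have : nbhs z V by exact: oV.
  by apply: filterS => w Vw; rewrite He.
apply: cvg_trans (near_eq_cvg N) _.
rewrite -(He z Vz); exact: C.
Qed.

Lemma open_nz (V : set (R * R)) f : open V ->
  (forall k n x y, V (x, y) -> is_derive y 1 (fam k n) (fam k n.+1 y)) ->
  SE fam V f -> open [set z | V z /\ f z != 0].
Proof.
move=> oV fD Sf; rewrite openE => z [Vz fz]; rewrite /interior /=.
have C := SE_cont oV fD Sf Vz.
have N1 : \forall w \near z, f w != 0 := cvgr_neq0 _ C fz.
have N2 : \forall w \near z, V w by exact: oV.
near=> w; split; near: w; [exact: N2|exact: N1].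
Unshelve. all: by end_near.
Qed.

Lemma smooth2_of_SE (V : set (R * R)) (eps : R) (F : R -> R -> R) : open V ->
  (forall k n x y, V (x, y) -> is_derive y 1 (fam k n) (fam k n.+1 y)) ->
  dom2 eps `<=` V -> SE fam V (fun z => F z.1 z.2) -> smooth_on_dom2 eps F.
Proof.
move=> oV fD sub Sf.
have [D [D0 DS]] := SE_smooth oV fD Sf.
exists V; split => //; split => //; exists D; split => // z dz; exact: D0 (sub z dz).
Qed.

Lemma pair0_cont (y : R) : {for y, continuous (fun s : R => (0:R, s))}.
Proof. have := @cvg_pair _ _ _ (nbhs y) (nbhs (0:R)) (nbhs y) _ _ _ (fun=> 0) id (cvg_cst _) (@cvg_id _ _). exact. Qed.

Lemma pairy_cont (y : R) (x : R) : {for x, continuous (fun s : R => (s, y))}.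
Proof. have := @cvg_pair _ _ _ (nbhs x) (nbhs x) (nbhs y) _ _ _ id (fun=> y) (@cvg_id _ _) (cvg_cst _). exact. Qed.

Lemma restrict0 (V : set (R * R)) (eps : R) f (g : R -> R) : open V ->
  (forall k n x y, V (x, y) -> is_derive y 1 (fam k n) (fam k n.+1 y)) ->
  SE fam V f -> (forall d, 0 <= d < eps -> V (0, d)) ->
  (forall d, 0 <= d < eps -> f (0, d) = g d) -> smooth_on_Ico eps g.
Proof.
move=> oV fD Sf sub E.
have [D [D0 DS]] := SE_smooth oV fD Sf.
exists [set d | V (0, d)]; split.
  have -> : [set d | V (0, d)] = (fun s : R => (0:R, s)) @^-1` V by [].
  apply: open_comp => // d _; exact: pair0_cont.
split; first by move=> d; rewrite /= in_itv /= => /sub.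
exists (fun n d => D 0%N n 0 d); split.
  by move=> d dI; rewrite (D0 (0, d)) ?E //; exact: sub.
by move=> n d Vd; have [_ [H _]] := DS 0%N n (0, d) Vd.
Qed.

Lemma lim_right0 (eps : R) (F : R -> R -> R) (f : R -> R -> R) d :
  smooth_on_dom2 eps F -> (forall u d, 0 < u <= 1 -> 0 <= d < eps -> F u d = f u d) ->
  0 <= d < eps -> f u d @[u --> 0^'+] --> F 0 d.
Proof.
move=> [U [oU [sub [D [D0 DS]]]]] E dI.
have z0 : dom2 eps (0, d) by split => //=; rewrite lexx ler01.
have [_ [_ C]] := DS 0%N 0%N (0, d) (sub _ z0).
have C1 : {for (0:R), continuous (fun s => D 0%N 0%N s d)}.
  apply: (continuous_comp (f := fun s : R => (s, d)) (g := fun q : R * R => D 0%N 0%N q.1 q.2)).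
    exact: pairy_cont.
  exact: C.
have C2 : (fun s => D 0%N 0%N s d) @ 0^'+ --> D 0%N 0%N 0 d := cvg_at_right_filter C1.
rewrite -(D0 (0, d) z0).
apply: cvg_trans C2; apply: near_eq_cvg.
near=> s.
have s0 : 0 < s by near: s; exact: nbhs_right_gt.
have s1 : s <= 1 by near: s; exact: nbhs_right_le ltr01.
rewrite -(E s d) ?s0 ?s1 //.
by rewrite -(D0 (s, d)) //; split => //=; rewrite ltW.
Unshelve. all: by end_near.
Qed.

Lemma uniq_ext (eps : R) (f : R -> R -> R) F1 F2 :
  smooth_on_dom2 eps F1 -> (forall u d, 0 < u <= 1 -> 0 <= d < eps -> F1 u d = f u d) ->
  smooth_on_dom2 eps F2 -> (forall u d, 0 < u <= 1 -> 0 <= d < eps -> F2 u d = f u d) ->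
  forall z, dom2 eps z -> F1 z.1 z.2 = F2 z.1 z.2.
Proof.
move=> S1 E1 S2 E2 [u d] [/= /andP [u0 u1] dI].
case: (ltrP 0 u) => [up|un].
  by rewrite E1 ?E2 ?up.
have -> : u = 0 by apply/eqP; rewrite eq_le un u0.
exact: (cvg_unique _ (lim_right0 S1 E1 dI) (lim_right0 S2 E2 dI)).
Qed.
End Glue.
Section Build.
Variable G : finType.
Variable R : realType.
Variable nu : R.
Variable fam : event G * state G -> nat -> R -> R.
Variable V : set (R * R).
Local Notation S := (state G).
Local Notation SE := (SE fam V).

Definition qq (d : R) : rule G R := fun e x => fam (e, x) 0%N d.

Lemma SE_q (e : event G) (x : S) : SE (fun z => qq z.2 e x).
Proof. exact: (SE_atom fam V (e, x)). Qed.

Lemma SE_site (uf : R * R -> R) b c : SE uf -> SE (fun z => site_prob (uf z) nu b c).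
Proof.
move=> Su; rewrite /site_prob.
apply: SE_add; first apply: SE_add.
- apply: SE_mul; [exact: SE_sub (SE_cst _ _ 1) Su|exact: SE_cst].
- apply: SE_mul; [apply: SE_mul; [exact: Su|exact: SE_cst]|exact: SE_cst].
- apply: SE_mul; [apply: SE_mul; [exact: Su|exact: SE_cst]|exact: SE_cst].
Qed.

Lemma SE_fac (uf : R * R -> R) (e : event G) (x y : S) (g : G) : SE uf -> SE (fun z => fac nu (uf z) e x y g).
Proof.
move=> Su; rewrite /fac; case: (e g) => [i|]; [exact: SE_site|exact: SE_cst].
Qed.

Lemma SE_trans (uf : R * R -> R) (x y : S) : SE uf -> SE (fun z => trans (qq z.2) (uf z) nu x y).
Proof.
move=> Su.
have H : SE (fun z => \sum_e qq z.2 e x * \prod_g fac nu (uf z) e x y g).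
  apply: SE_sum => e _; apply: SE_mul; first exact: SE_q.
  apply: SE_prod => g _; exact: SE_fac.
by apply: (SE_ext H) => z _; rewrite transE.
Qed.

Lemma SE_Pd (uf : R * R -> R) (x y : S) : SE uf -> SE (fun z => Pd nu (qq z.2) (uf z) x y).
Proof.
move=> Su; rewrite /Pd; case: (pickP (fun g => x g != y g)) => [g0 _|_]; last exact: SE_cst.
apply: SE_sum => e _; apply: SE_mul; first exact: SE_q.
apply: SE_prod => g _; case: (g == g0); [exact: SE_cst|exact: SE_fac].
Qed.

Lemma SE_rr (uf : R * R -> R) (x y : S) : SE uf -> SE (fun z => rr nu (qq z.2) (uf z) x y).
Proof. move=> Su; rewrite /rr; case: (isC x); [exact: SE_Pd|exact: SE_trans]. Qed.

Lemma SE_WWu (x y : S) : SE (fun z => WWu nu (qq z.2) z.1 x y).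
Proof.
have Su := SE_fst fam V.
rewrite /WWu /WW; case: (y == st_a G).
  rewrite /wv; case: (isC x); [exact: SE_cst|exact: Su].
rewrite /KK; case: (x == y).
  apply: SE_sum => w _; exact: SE_rr.
apply: SE_opp; exact: SE_rr.
Qed.

Lemma SE_Wm (i j : 'I_#|S|) : SE (fun z => Wm nu (qq z.2) z.1 i j).
Proof. by apply: (SE_ext (SE_WWu (enum_val i) (enum_val j))) => z _; rewrite mxE. Qed.

Lemma SE_detW : SE (fun z => \det (Wm nu (qq z.2) z.1)).
Proof. apply: SE_det => i j; exact: SE_Wm. Qed.

Lemma SE_adjW (i j : 'I_#|S|) : SE (fun z => \adj (Wm nu (qq z.2) z.1) i j).
Proof. apply: SE_adj => i' j'; exact: SE_Wm. Qed.

Lemma SE_Nm (i j : 'I_#|S|) : SE (fun z => Nm nu (qq z.2) i j).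
Proof.
have S0 : SE (fun=> (0:R)) := SE_cst fam V 0.
apply: (SE_ext (f := fun z => Nf nu (qq z.2) (enum_val i) (enum_val j))); last by move=> z _; rewrite mxE.
rewrite /Nf; apply: SE_sub; first exact: SE_cst.
case: (isC (enum_val i)); first exact: SE_cst.
exact: (SE_trans (uf := fun=> 0)).
Qed.

Lemma SE_detN : SE (fun z => \det (Nm nu (qq z.2))).
Proof. apply: SE_det => i j; exact: SE_Nm. Qed.

Lemma SE_adjN (i j : 'I_#|S|) : SE (fun z => \adj (Nm nu (qq z.2)) i j).
Proof. apply: SE_adj => i' j'; exact: SE_Nm. Qed.

Lemma SE_egh (g h : G) (x : S) : SE (fun z => e_gh (qq z.2) g h x).
Proof. rewrite /e_gh; apply: SE_sum => e _; exact: SE_q. Qed.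

Lemma SE_btot (x : S) : SE (fun z => b_tot (qq z.2) x).
Proof. rewrite /b_tot /b_g; apply: SE_sum => g _; apply: SE_sum => h _; exact: SE_egh. Qed.

Lemma SE_dg (g : G) (x : S) : SE (fun z => d_g (qq z.2) g x).
Proof. rewrite /d_g; apply: SE_sum => h _; exact: SE_egh. Qed.

Lemma SE_muA (x : S) : (forall z, V z -> b_tot (qq z.2) (st_a G) != 0) -> SE (fun z => mu_A (qq z.2) x).
Proof.
move=> nz; rewrite /mu_A; apply: SE_sum => g _; apply: SE_mul; first exact: SE_cst.
apply: SE_div; [exact: SE_dg|exact: SE_btot|exact: nz].
Qed.

Lemma SE_mua (x : S) : (forall z, V z -> b_tot (qq z.2) (st_A G) != 0) -> SE (fun z => mu_a (qq z.2) x).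
Proof.
move=> nz; rewrite /mu_a; apply: SE_sum => g _; apply: SE_mul; first exact: SE_cst.
apply: SE_div; [exact: SE_dg|exact: SE_btot|exact: nz].
Qed.
End Build.
Unset Implicit Arguments.
Theorem proposition4 (G : finType) (R : realType) (eps nu : R)
  (p : R -> rule G R)
  (pi : R -> R -> state G -> R) :
  (0 < #|G|)%N ->
  0 < nu < 1 ->
  (forall d, 0 <= d < eps -> is_rule (p d)) ->
  (forall d, 0 <= d < eps -> fixation_axiom (p d)) ->
  (* Assumption 2: weak selection *)
  (forall e x, smooth_on_Ico eps (fun d => p d e x)) ->
  (forall e x y, p 0 e x = p 0 e y) ->
  (* pi d u = pi_MSS at selection strength d and mutation probability u *)
  (forall d u, 0 <= d < eps -> 0 < u <= 1 -> stationary (p d) u nu (pi d u)) ->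
  (* (a) *)
  (smooth_on_Ico eps (fun d => rho_A (p d) nu) /\
   smooth_on_Ico eps (fun d => rho_a (p d) nu) /\
   (forall x, x != st_a G -> x != st_A G ->
      exists f : R -> R, smooth_on_Ico eps f /\
        forall d, 0 <= d < eps ->
          (pi d u x / (1 - pi d u (st_a G) - pi d u (st_A G))) @[u --> 0^'+]
            --> f d)) /\
  (* (b) *)
  (forall x, extends_uniquely_smooth eps (fun u d => pi d u x)) /\
  (* (c) *)
  (forall x, x != st_a G -> x != st_A G ->
     extends_uniquely_smooth eps
       (fun u d => pi d u x / (1 - pi d u (st_a G) - pi d u (st_A G)))).
Proof.
move=> G0 /andP [nu0 nu1] Hrule Hfix Hsm Hw Hstat.
have Hch : forall k : event G * state G, exists UD : set R * (nat -> R -> R),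
   open UD.1 /\ `[0, eps[ `<=` UD.1 /\ (forall d, 0 <= d < eps -> UD.2 0%N d = p d k.1 k.2) /\
   (forall n d, UD.1 d -> is_derive d 1 (UD.2 n) (UD.2 n.+1 d)).
  move=> [e x]; have [U [oU [sU [D [D0 DD]]]]] := Hsm e x; by exists (U, D).
have [UD HUD] := choice Hch.
pose fam (k : event G * state G) n d := (UD k).2 n d.
pose V0 := [set z : R * R | forall k, (UD k).1 z.2].
have oV0 : open V0.
  rewrite openE => z Vz; rewrite /interior.
  have H : forall k, nbhs z.2 (fun d => (UD k).1 d).
    by move=> k; have [oU _] := HUD k; exact: oU (Vz k).
  have Ns : forall s : seq (event G * state G), nbhs z.2 [set d | forall k, k \in s -> (UD k).1 d].
    elim => [|k s IH].
      by apply: filterS filterT => d _ k; rewrite in_nil.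
    apply: filterS (filterI (H k) IH) => d [Hk Hs] k'; rewrite inE => /orP [/eqP ->//|]; exact: Hs.
  have N : \forall d \near z.2, forall k, (UD k).1 d.
    apply: filterS (Ns (enum (@predT (event G * state G)))) => d Hd k; apply: Hd; by rewrite mem_enum.
  exact: (@c2 R z _ N).
have famD : forall V, V `<=` V0 -> forall k n x y, V (x, y) -> is_derive y 1 (fam k n) (fam k n.+1 y).
  move=> V sub k n x y Vxy; have [_ [_ [_ DD]]] := HUD k; apply: DD; exact: (sub _ Vxy k).
pose q := qq fam.
have qp : forall d, 0 <= d < eps -> q d = p d.
  move=> d dI; apply/funext => e; apply/funext => x; have [_ [_ [D0 _]]] := HUD (e, x); exact: D0.
have dom0 : forall z, dom2 eps z -> V0 z.
  move=> z [_ dI] k; have [_ [sU _]] := HUD k; apply: sU; by rewrite /= in_itv /=.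
have pge0 : forall d, 0 <= d < eps -> forall e x, 0 <= p d e x.
  by move=> d dI e x; have [H _] := Hrule d dI x; exact: H.
have psum : forall d, 0 <= d < eps -> forall x, \sum_e p d e x = 1.
  by move=> d dI x; have [_ H] := Hrule d dI x.
pose Vb := [set z : R * R | V0 z /\ \det (Wm nu (q z.2) z.1) != 0].
have oVb : open Vb := open_nz oV0 (famD V0 (fun _ h => h)) (SE_detW nu fam V0).
have sVb : Vb `<=` V0 by move=> z [].
have dVb : dom2 eps `<=` Vb.
  move=> z dz; split; first exact: dom0.
  case: dz => u01 dI; rewrite qp //; exact: (Wm_det nu0 nu1 (pge0 _ dI) (Hfix _ dI) u01).
have partb : forall x, extends_uniquely_smooth eps (fun u d => pi d u x).
  move=> x.
  pose F u d := (if isC x then 1 else u) * \adj (Wm nu (q d) u) (enum_rank (st_a G)) (enum_rank x) / \det (Wm nu (q d) u).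
  have SF : smooth_on_dom2 eps F.
    apply: (smooth2_of_SE oVb (famD Vb sVb) dVb).
    apply: SE_div.
    - apply: SE_mul; last exact: SE_adjW.
      rewrite /F; case: (isC x); [exact: SE_cst|exact: SE_fst].
    - exact: SE_detW.
    - by move=> z [].
  have EF : forall u d, 0 < u <= 1 -> 0 <= d < eps -> F u d = pi d u x.
    move=> u d u01 dI; rewrite /F qp //.
    by rewrite -(stat_formula nu0 nu1 (pge0 _ dI) (psum _ dI) (Hfix _ dI) u01 (Hstat d u dI u01)).
  split; first by exists F.
  by move=> F1 F2 S1 E1 S2 E2; exact: uniq_ext S1 E1 S2 E2.
pose den (z : R * R) := \sum_(y | ~~ isC y) \adj (Wm nu (q z.2) z.1) (enum_rank (st_a G)) (enum_rank y).
have Sden : SE fam Vb den by apply: SE_sum => y _; exact: SE_adjW.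
pose Vc := [set z : R * R | Vb z /\ den z != 0].
have oVc : open Vc := open_nz oVb (famD Vb sVb) Sden.
have sVc : Vc `<=` V0 by move=> z [[]].
have partc : forall x, x != st_a G -> x != st_A G ->
   exists F, smooth_on_dom2 eps F /\ smooth_on_Ico eps (fun d => F 0 d) /\
     forall u d, 0 < u <= 1 -> 0 <= d < eps -> F u d = pi d u x / (1 - pi d u (st_a G) - pi d u (st_A G)).
  move=> x xa xA.
  have Cx : ~~ isC x by rewrite /isC negb_or xa xA.
  have dVc : dom2 eps `<=` Vc.
    move=> z dz; split; first exact: dVb.
    case: dz => u01 dI; rewrite /den qp //; exact: (den_ne0 nu0 nu1 (pge0 _ dI) (Hfix _ dI) u01 Cx).
  pose F u d := \adj (Wm nu (q d) u) (enum_rank (st_a G)) (enum_rank x) /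
      \sum_(y | ~~ isC y) \adj (Wm nu (q d) u) (enum_rank (st_a G)) (enum_rank y).
  have SEF : SE fam Vc (fun z => F z.1 z.2).
    apply: SE_div; [exact: SE_adjW|apply: SE_sum => y _; exact: SE_adjW|by move=> z []].
  exists F; split; first exact: (smooth2_of_SE oVc (famD Vc sVc) dVc SEF).
  split.
    apply: (restrict0 (V := Vc) oVc (famD Vc sVc) SEF) => // d dI.
    by apply: dVc; split => //=; rewrite lexx ler01.
  move=> u d u01 dI; rewrite /F qp //.
  by rewrite -(ratio_formula nu0 nu1 (pge0 _ dI) (psum _ dI) (Hfix _ dI) u01 (Hstat d u dI u01) Cx).
pose Vr := [set z : R * R | V0 z /\ \det (Nm nu (q z.2)) != 0].
have oVr : open Vr := open_nz oV0 (famD V0 (fun _ h => h)) (SE_detN nu fam V0).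
have sVr : Vr `<=` V0 by move=> z [].
pose Vr2 := [set z : R * R | Vr z /\ b_tot (q z.2) (st_a G) != 0].
have oVr2 : open Vr2 := open_nz oVr (famD Vr sVr) (SE_btot fam Vr (st_a G)).
have sVr2 : Vr2 `<=` V0 by move=> z [[]].
pose Vr3 := [set z : R * R | Vr2 z /\ b_tot (q z.2) (st_A G) != 0].
have oVr3 : open Vr3 := open_nz oVr2 (famD Vr2 sVr2) (SE_btot fam Vr2 (st_A G)).
have sVr3 : Vr3 `<=` V0 by move=> z [[[]]].
have dVr3 : forall d, 0 <= d < eps -> Vr3 (0, d).
  move=> d dI; have z0 : dom2 eps (0, d) by split => //=; rewrite lexx ler01.
  split; [split; [split|]|]; first exact: dom0.
  - rewrite /= qp //; exact: (Nm_det nu0 nu1 (pge0 _ dI) (psum _ dI) (Hfix _ dI)).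
  - rewrite /= qp //; apply: lt0r_neq0; exact: (b_tot_pos (pge0 _ dI) (Hfix _ dI)).
  - rewrite /= qp //; apply: lt0r_neq0; exact: (b_tot_pos (pge0 _ dI) (Hfix _ dI)).
have nzA : forall z, Vr3 z -> b_tot (qq fam z.2) (st_a G) != 0 by move=> z [[]].
have nza : forall z, Vr3 z -> b_tot (qq fam z.2) (st_A G) != 0 by move=> z [].
have partc' : forall x, x != st_a G -> x != st_A G -> extends_uniquely_smooth eps
       (fun u d => pi d u x / (1 - pi d u (st_a G) - pi d u (st_A G))).
  move=> x xa xA; have [F [SF [_ EF]]] := partc x xa xA.
  split; first by exists F.
  by move=> F1 F2 S1 E1 S2 E2; exact: uniq_ext S1 E1 S2 E2.
split; last by split; [exact: partb|exact: partc'].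
split.
  apply: (restrict0 (V := Vr3) oVr3 (famD Vr3 sVr3) (f := fun z =>
     \sum_x mu_A (q z.2) x * (\adj (Nm nu (q z.2)) (enum_rank x) (enum_rank (st_A G)) / \det (Nm nu (q z.2))))).
  - apply: SE_sum => x _; apply: SE_mul; first exact: SE_muA.
    apply: SE_div; [exact: SE_adjN|exact: SE_detN|by move=> z [[[]]]].
  - exact: dVr3.
  - move=> d dI /=; rewrite qp //.
    by rewrite (rho_A_formula nu0 nu1 (pge0 _ dI) (psum _ dI) (Hfix _ dI)).
split.
  apply: (restrict0 (V := Vr3) oVr3 (famD Vr3 sVr3) (f := fun z =>
     \sum_x mu_a (q z.2) x * (\adj (Nm nu (q z.2)) (enum_rank x) (enum_rank (st_a G)) / \det (Nm nu (q z.2))))).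
  - apply: SE_sum => x _; apply: SE_mul; first exact: SE_mua.
    apply: SE_div; [exact: SE_adjN|exact: SE_detN|by move=> z [[[]]]].
  - exact: dVr3.
  - move=> d dI /=; rewrite qp //.
    by rewrite (rho_a_formula nu0 nu1 (pge0 _ dI) (psum _ dI) (Hfix _ dI)).
move=> x xa xA.
have [F [SF [S0 EF]]] := partc x xa xA.
exists (fun d => F 0 d); split => // d dI.
exact: (lim_right0 SF EF dI).
Qed.
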